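(* Let $\beta\in(1,2)$, $M\ge2$, and let $v=(v_0,\dots,v_M)$ be any grid function with $v_0=v_M=0$. Then $$\frac{c^{(\beta)}_\ast}{(b-a)^\beta}\,h\sum_{j=1}^{M-1}v_j^2\le h^{1-\beta}\sum_{j=1}^{M-1}\Big(\sum_{k=0}^{M}r^{(\beta)}_{j-k}v_k\Big)v_j\le 2r^{(\beta)}_0h^{1-\beta}\sum_{j=1}^{M-1}v_j^2,$$ where $c^{(\beta)}_\ast=\frac{(1-\beta)(2-\beta)(3-\beta)4^{\beta}e^{-9/4}\Psi_\beta}{3}$.
   Context: $a<b$, $h=(b-a)/M$, $x_j=a+jh$. Let $g^{(\beta)}_k=(-1)^k\binom{\beta}{k}$, $\Psi_\beta=\frac{1}{2\cos(\pi\beta/2)}$, and $r^{(\beta)}_0=2\Psi_\beta(\frac{\beta}{2}g^{(\beta)}_1+\frac{2-\beta}{2}g^{(\beta)}_0)$, $r^{(\beta)}_1=\Psi_\beta(\frac{\beta}{2}g^{(\beta)}_0+\frac{2-\beta}{2}g^{(\beta)}_1+\frac{\beta}{2}g^{(\beta)}_2)$, $r^{(\beta)}_k=\Psi_\beta(\frac{\beta}{2}g^{(\beta)}_{k+1}+\frac{2-\beta}{2}g^{(\beta)}_k)$ for $k\ge2$, $r^{(\beta)}_{-k}=r^{(\beta)}_k$ for $k\ge1$. *)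

(* Defs.v *)
From Stdlib Require Import Reals ZArith Lra.
Open Scope R_scope.

Fixpoint gbinom (beta : R) (k : nat) : R :=
  match k with
  | O => 1
  | S k' => gbinom beta k' * (beta - INR k') / INR (S k')
  end.

Definition gcoef (beta : R) (k : nat) : R := (-1) ^ k * gbinom beta k.

Definition Psi (beta : R) : R := 1 / (2 * cos (PI * beta / 2)).

Definition rnat (beta : R) (k : nat) : R :=
  match k with
  | O => 2 * Psi beta * (beta / 2 * gcoef beta 1 + (2 - beta) / 2 * gcoef beta 0)
  | S O => Psi beta * (beta / 2 * gcoef beta 0 + (2 - beta) / 2 * gcoef beta 1
                       + beta / 2 * gcoef beta 2)
  | k => Psi beta * (beta / 2 * gcoef beta (S k) + (2 - beta) / 2 * gcoef beta k)
  end.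

Definition rcoef (beta : R) (k : Z) : R := rnat beta (Z.abs_nat k).

Definition cstar (beta : R) : R :=
  (1 - beta) * (2 - beta) * (3 - beta) * Rpower 4 beta * exp (- (9 / 4)) * Psi beta / 3.

(* Main.v *)
Require Import Defs.
From Stdlib Require Import Reals ZArith Lra Lia.
Open Scope R_scope.


Fixpoint sm (n : nat) (f : nat -> R) : R :=
  match n with O => 0 | S n => sm n f + f n end.

Lemma sm_ext n f g : (forall i, (i < n)%nat -> f i = g i) -> sm n f = sm n g.
Proof. induction n; simpl; intros H; auto. rewrite IHn by (intros; apply H; lia). rewrite H by lia; auto. Qed.

Lemma sm_le n f g : (forall i, (i < n)%nat -> f i <= g i) -> sm n f <= sm n g.
Proof. induction n; simpl; intros H; [lra|]. assert (sm n f <= sm n g) by (apply IHn; intros; apply H; lia).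
 assert (f n <= g n) by (apply H; lia). lra. Qed.

Lemma sm_plus n f g : sm n (fun i => f i + g i) = sm n f + sm n g.
Proof. induction n; simpl; [lra|]. rewrite IHn; lra. Qed.

Lemma sm_scal n c f : sm n (fun i => c * f i) = c * sm n f.
Proof. induction n; simpl; [lra|]. rewrite IHn; lra. Qed.

Lemma sm_shift n f : sm (S n) f = f O + sm n (fun i => f (S i)).
Proof. induction n; simpl in *; [lra|]. rewrite IHn; lra. Qed.

Lemma sm_exch n m f : sm n (fun j => sm m (fun i => f j i)) = sm m (fun i => sm n (fun j => f j i)).
Proof. induction n; simpl.
 - induction m; simpl; auto. rewrite <- IHm; lra.
 - rewrite IHn. rewrite <- sm_plus. reflexivity. Qed.

Lemma sum_f_R0_sm f N : sum_f_R0 f N = sm (S N) f.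
Proof. induction N; simpl in *; [lra|]. rewrite IHN; reflexivity. Qed.

Lemma sm_nonneg n f : (forall i, (i < n)%nat -> 0 <= f i) -> 0 <= sm n f.
Proof. intros H. replace 0 with (sm n (fun _ => 0)). apply sm_le; auto.
 induction n; simpl; auto. rewrite IHn; [lra|]. intros; apply H; lia. Qed.

Lemma quad_upper n (a c : nat -> nat -> R) (w : nat -> R) :
  (forall j i, c j i = c i j) ->
  (forall j i, a j i * w i * w j <= c j i * (w j ^ 2 + w i ^ 2) / 2) ->
  sm n (fun j => sm n (fun i => a j i * w i) * w j)
  <= sm n (fun j => sm n (fun i => c j i) * w j ^ 2).
Proof.
  intros Hc Ha.
  apply Rle_trans with (sm n (fun j => sm n (fun i => c j i * (w j ^ 2 + w i ^ 2) / 2))).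
  - apply sm_le; intros j _.
    replace (sm n (fun i => a j i * w i) * w j) with (sm n (fun i => a j i * w i * w j)).
    + apply sm_le; intros; apply Ha.
    + rewrite Rmult_comm, <- sm_scal. apply sm_ext; intros; ring.
  - right.
    transitivity (sm n (fun j => sm n (fun i => /2 * (c j i * w j ^ 2)) + sm n (fun i => /2 * (c j i * w i ^ 2)))).
    + apply sm_ext; intros. rewrite <- sm_plus. apply sm_ext; intros. field.
    + rewrite sm_plus. rewrite (sm_exch n n (fun j i => /2 * (c j i * w i ^ 2))).
      rewrite <- sm_plus. apply sm_ext; intros j _.
      rewrite !sm_scal.
      replace (sm n (fun j0 => c j0 j * w j ^ 2)) with (sm n (fun i => c j i * w j ^ 2)).
      * replace (sm n (fun i : nat => c j i * w j ^ 2)) with (sm n (fun i => w j ^ 2 * c j i)) by (apply sm_ext; intros; ring).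
        rewrite sm_scal. change (fun i : nat => c j i) with (c j). lra.
      * apply sm_ext; intros; rewrite Hc; auto.
Qed.

Lemma Psi_neg b : 1 < b < 2 -> Psi b < 0.
Proof. intros Hb. unfold Psi. assert (cos (PI * b / 2) < 0).
 { apply cos_lt_0; pose proof PI_RGT_0; nra. }
 unfold Rdiv. rewrite Rmult_1_l. apply Rinv_lt_0_compat. lra. Qed.

Lemma grec b k : gcoef b (S k) = gcoef b k * (INR k - b) / (INR k + 1).
Proof. unfold gcoef. cbn [gbinom pow]. rewrite S_INR. field.
 pose proof (pos_INR k). lra. Qed.

Lemma g0 b : gcoef b 0 = 1.  Proof. unfold gcoef; simpl; ring. Qed.
Lemma g1 b : gcoef b 1 = - b.  Proof. rewrite grec, g0; simpl; field. Qed.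
Lemma g2 b : gcoef b 2 = b * (b - 1) / 2.  Proof. rewrite grec, g1; simpl; field. Qed.

Lemma gpos b k : 1 < b < 2 -> (2 <= k)%nat -> 0 < gcoef b k.
Proof. intros Hb Hk. induction k as [|k IH]; [lia|].
 destruct (Nat.eq_dec k 1) as [->|Hk1].
 - rewrite g2. nra.
 - rewrite grec. assert (0 < gcoef b k) by (apply IH; lia).
   assert (2 <= INR k) by (replace 2 with (INR 2) by (simpl; ring); apply le_INR; lia).
   apply Rmult_lt_0_compat; [apply Rmult_lt_0_compat|]; try lra. apply Rinv_0_lt_compat; lra. Qed.

Lemma rnat_nonpos b m : 1 < b < 2 -> (1 <= m)%nat -> rnat b m <= 0.
Proof. intros Hb Hm. pose proof (Psi_neg b Hb).
 destruct m as [|[|m]]; [lia| |].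
 - unfold rnat. rewrite g0, g1, g2.
   assert (0 < b / 2 * 1 + (2 - b) / 2 * - b + b / 2 * (b * (b - 1) / 2)) by nra. nra.
 - unfold rnat. pose proof (gpos b (S (S (S m))) Hb ltac:(lia)). pose proof (gpos b (S (S m)) Hb ltac:(lia)).
   assert (0 < b / 2 * gcoef b (S (S (S m))) + (2 - b) / 2 * gcoef b (S (S m))) by nra. nra. Qed.

Lemma r0_eq b : rnat b 0 = - Psi b * (b - 1) * (b + 2).
Proof. unfold rnat. rewrite g0, g1. field. Qed.

Lemma r0_nonneg b : 1 < b < 2 -> 0 <= rnat b 0.
Proof. intros Hb; rewrite r0_eq; pose proof (Psi_neg b Hb). assert (0 < - Psi b * (b - 1)) by nra. nra. Qed.

Definition G b p := sm (S p) (gcoef b).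

Lemma Gclosed b p : 1 < b -> G b p = - (INR p + 1) * gcoef b (S p) / b.
Proof. intros Hb. unfold G. induction p.
 - simpl. rewrite g1. rewrite Rplus_0_l. replace (gcoef b 0) with 1 by (rewrite g0; auto). field. lra.
 - change (sm (S (S p)) (gcoef b)) with (sm (S p) (gcoef b) + gcoef b (S p)). rewrite IHp.
   rewrite (grec b (S p)). rewrite S_INR. pose proof (pos_INR p). field. repeat split; lra. Qed.

Lemma Grec b p : 1 < b -> G b (S p) = G b p * (INR p + 1 - b) / (INR p + 1).
Proof. intros Hb. rewrite !Gclosed by auto. rewrite (grec b (S p)). rewrite !S_INR. field.
 pose proof (pos_INR p). repeat split; lra. Qed.

Lemma Pform b n : 2 * sm (S (S n)) (rnat b) - rnat b 0
   = 2 * Psi b * (b / 2 * G b (S (S n)) + (2 - b) / 2 * G b (S n)).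
Proof. unfold G. induction n.
 - simpl. unfold rnat. field.
 - change (sm (S (S (S n))) (rnat b)) with (sm (S (S n)) (rnat b) + rnat b (S (S n))).
   replace (2 * (sm (S (S n)) (rnat b) + rnat b (S (S n))) - rnat b 0) with
     ((2 * sm (S (S n)) (rnat b) - rnat b 0) + 2 * rnat b (S (S n))) by ring.
   rewrite IHn.
   change (rnat b (S (S n))) with (Psi b * (b/2 * gcoef b (S (S (S n))) + (2-b)/2 * gcoef b (S (S n)))).
   change (sm (S (S (S (S n)))) (gcoef b)) with (sm (S (S (S n))) (gcoef b) + gcoef b (S (S (S n)))).
   change (sm (S (S (S n))) (gcoef b)) with (sm (S (S n)) (gcoef b) + gcoef b (S (S n))).
   ring. Qed.

Lemma exp_le_mono x y : x <= y -> exp x <= exp y.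
Proof. intros [H|H]; [left; apply exp_increasing; auto| right; subst; auto]. Qed.

Lemma ln_le_m1 z : 0 < z -> ln z <= z - 1.
Proof. intros Hz. pose proof (exp_ineq1_le (ln z)). rewrite exp_ln in H; lra. Qed.

Lemma bern x y a : 0 < x -> 0 < y -> 0 <= a <= 1 ->
  Rpower x a <= Rpower y a * ((1 - a) + a * x / y).
Proof. intros Hx Hy Ha. set (c := (1 - a) + a * x / y).
 assert (Hc : 0 < c).
 { unfold c. assert (0 < (1 - a) * y + a * x).
   { destruct (Rle_dec x y); nra. }
   replace ((1 - a) + a * x / y) with (((1 - a) * y + a * x) / y) by (field; lra).
   apply Rdiv_lt_0_compat; lra. }
 unfold Rpower. rewrite <- (exp_ln c) by auto. rewrite <- exp_plus. apply exp_le_mono.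
 assert (L1 : ln (x * / (y * c)) <= x * / (y * c) - 1).
 { apply ln_le_m1. apply Rmult_lt_0_compat; auto. apply Rinv_0_lt_compat; nra. }
 rewrite ln_mult, ln_Rinv, ln_mult in L1 by (try apply Rinv_0_lt_compat; nra).
 assert (L2 : ln (/ c) <= / c - 1) by (apply ln_le_m1; apply Rinv_0_lt_compat; auto).
 rewrite ln_Rinv in L2 by auto.
 assert (E : a * (x * / (y * c)) + (1 - a) * / c = 1).
 { assert (Ec : (1 - a) * y + a * x = c * y) by (unfold c; field; lra). unfold c. field. split; [lra|]. rewrite Ec. apply Rgt_not_eq. nra. }
 assert (a * (ln x + - (ln y + ln c)) <= a * (x * / (y * c) - 1)) by (apply Rmult_le_compat_l; lra).
 assert ((1 - a) * (- ln c) <= (1 - a) * (/ c - 1)) by (apply Rmult_le_compat_l; lra).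
 nra. Qed.

Lemma Hbound b k : 1 < b < 2 ->
  (b - 1) * (2 - b) <= - G b (S (S k)) * (INR (S k) + 1) * Rpower (INR (S k)) (b - 1).
Proof. intros Hb. induction k.
 - unfold G. simpl sm. rewrite g0, g1, g2. simpl INR. unfold Rpower. rewrite ln_1, Rmult_0_r, exp_0. right; field.
 - rewrite Grec by lra. set (m := INR (S k)) in *.
   assert (Hm : 1 <= m) by (unfold m; rewrite S_INR; pose proof (pos_INR k); lra).
   replace (INR (S (S k))) with (m + 1) by (unfold m; rewrite (S_INR (S k)); auto).
   set (H := - G b (S (S k))) in *.
   assert (Hpm : 0 < Rpower m (b - 1)) by (unfold Rpower; apply exp_pos).
   assert (Hpm1 : 0 < Rpower (m+1) (b - 1)) by (unfold Rpower; apply exp_pos).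
   assert (HH : 0 < H).
   { assert (0 < H * ((m + 1) * Rpower m (b - 1))) by (fold H in IHk; rewrite Rmult_assoc in IHk; nra).
     assert (0 < (m + 1) * Rpower m (b - 1)) by nra.
     destruct (Rlt_le_dec 0 H); auto. nra. }
   pose proof (bern m (m + 1) (b - 1) ltac:(lra) ltac:(lra) ltac:(lra)) as B.
   assert (B2 : (m + 1) * Rpower m (b - 1) <= Rpower (m + 1) (b - 1) * (m + 2 - b)).
   { replace (Rpower (m + 1) (b - 1) * (m + 2 - b)) with
       ((m + 1) * (Rpower (m + 1) (b - 1) * (1 - (b - 1) + (b - 1) * m / (m + 1)))) by (field; lra).
     apply Rmult_le_compat_l; lra. }
   fold H in IHk.
   replace (- (G b (S (S k)) * (m + 1 + 1 - b) / (m + 1 + 1)) * (m + 1 + 1) * Rpower (m + 1) (b - 1))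
     with (H * (Rpower (m + 1) (b - 1) * (m + 2 - b))) by (unfold H; field; lra).
   assert (H * ((m + 1) * Rpower m (b - 1)) <= H * (Rpower (m + 1) (b - 1) * (m + 2 - b))) by (apply Rmult_le_compat_l; lra).
   nra.
Qed.

Lemma sm_S n f : sm (S n) f = sm n f + f n.
Proof. reflexivity. Qed.

Lemma row_aux j f : sm (S j) (fun i => f (Z.abs_nat (Z.of_nat j - Z.of_nat i))) = sm (S j) f.
Proof. induction j.
 - simpl. reflexivity.
 - rewrite sm_shift. change (sm (S (S j)) f) with (sm (S j) f + f (S j)).
   rewrite <- IHj. replace (Z.abs_nat (Z.of_nat (S j) - Z.of_nat 0)) with (S j) by lia.
   rewrite (sm_ext _ (fun i => f (Z.abs_nat (Z.of_nat (S j) - Z.of_nat (S i)))) (fun i => f (Z.abs_nat (Z.of_nat j - Z.of_nat i)))).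
   + lra.
   + intros; f_equal; lia.
Qed.

Lemma row_t j t f : sm (S j + t) (fun i => f (Z.abs_nat (Z.of_nat j - Z.of_nat i))) = sm (S j) f + sm (S t) f - f O.
Proof. induction t.
 - rewrite Nat.add_0_r, row_aux. simpl. lra.
 - replace (S j + S t)%nat with (S (S j + t)) by lia. rewrite sm_S. rewrite IHt.
   change (sm (S (S t)) f) with (sm (S t) f + f (S t)).
   replace (Z.abs_nat (Z.of_nat j - Z.of_nat (S j + t))) with (S t) by lia. lra.
Qed.

Lemma row n j f : (j < n)%nat -> sm n (fun i => f (Z.abs_nat (Z.of_nat j - Z.of_nat i))) = sm (S j) f + sm (n - j) f - f O.
Proof. intros H. replace n with (S j + (n - S j))%nat by lia. rewrite row_t. 
 replace (S j + (n - S j) - j)%nat with (S (n - S j)) by lia. reflexivity. Qed.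

Lemma sm_opp n f : sm n (fun i => - f i) = - sm n f.
Proof. induction n; simpl; [lra|]. rewrite IHn; lra. Qed.

Lemma quad_lower n (a c : nat -> nat -> R) (w : nat -> R) :
  (forall j i, c j i = c i j) ->
  (forall j i, c j i * (w j ^ 2 + w i ^ 2) / 2 <= a j i * w i * w j) ->
  sm n (fun j => sm n (fun i => c j i) * w j ^ 2)
  <= sm n (fun j => sm n (fun i => a j i * w i) * w j).
Proof. intros Hc Ha.
 pose proof (quad_upper n (fun j i => - a j i) (fun j i => - c j i) w) as Q.
 assert (E1 : sm n (fun j => sm n (fun i => - a j i * w i) * w j) = - sm n (fun j => sm n (fun i => a j i * w i) * w j)).
 { rewrite <- sm_opp. apply sm_ext; intros j _.
   replace (sm n (fun i => - a j i * w i)) with (- sm n (fun i => a j i * w i)) by (rewrite <- sm_opp; apply sm_ext; intros; ring).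
   ring. }
 assert (E2 : sm n (fun j => sm n (fun i => - c j i) * w j ^ 2) = - sm n (fun j => sm n (fun i => c j i) * w j ^ 2)).
 { rewrite <- sm_opp. apply sm_ext; intros j _.
   replace (sm n (fun i => - c j i)) with (- sm n (fun i => c j i)) by (rewrite <- sm_opp; apply sm_ext; intros; ring).
   ring. }
 cbv beta in Q. rewrite E1, E2 in Q. 
 assert (- sm n (fun j => sm n (fun i => a j i * w i) * w j) <= - sm n (fun j => sm n (fun i => c j i) * w j ^ 2)).
 { apply Q. - intros; rewrite Hc; auto. - intros j i. specialize (Ha j i). lra. }
 lra. Qed.

Lemma P_mono b p t : 1 < b < 2 -> (1 <= p)%nat -> sm (p + t) (rnat b) <= sm p (rnat b).
Proof. intros Hb Hp. induction t.
 - rewrite Nat.add_0_r; lra.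
 - replace (p + S t)%nat with (S (p + t)) by lia. rewrite sm_S.
   pose proof (rnat_nonpos b (p + t) Hb ltac:(lia)). lra. Qed.

Lemma P_mono' b p n : 1 < b < 2 -> (1 <= p <= n)%nat -> sm n (rnat b) <= sm p (rnat b).
Proof. intros Hb Hp. replace n with (p + (n - p))%nat by lia. apply P_mono; auto; lia. Qed.

Lemma PA b p : 1 < b < 2 -> sm (S p) (fun m => Rabs (rnat b m)) = 2 * rnat b 0 - sm (S p) (rnat b).
Proof. intros Hb. induction p.
 - simpl. rewrite Rabs_right by (apply Rle_ge, r0_nonneg; auto). lra.
 - rewrite (sm_S (S p)), IHp, (sm_S (S p) (rnat b)).
   rewrite Rabs_left1 by (apply rnat_nonpos; auto; lia). lra. Qed.

Lemma cstar_bound b : 1 < b < 2 -> cstar b <= (b - 1) * (2 - b) * (- 2 * Psi b).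
Proof. intros Hb. pose proof (Psi_neg b Hb).
 set (K := (b - 1) * (2 - b) * (- Psi b)).
 assert (HK : 0 < K) by (unfold K; assert (0 < (b-1)*(2-b)) by nra; nra).
 assert (E : cstar b = K * ((3 - b) * Rpower 4 b * exp (- (9/4)) / 3)) by (unfold cstar, K; field).
 rewrite E. replace ((b - 1) * (2 - b) * (- 2 * Psi b)) with (K * 2) by (unfold K; ring).
 apply Rmult_le_compat_l; [lra|].
 assert (P4 : Rpower 4 b <= 16).
 { replace 16 with (Rpower 4 (INR 2)) by (rewrite Rpower_pow by lra; simpl; ring).
   apply Rle_Rpower; [lra|]. simpl; lra. }
 assert (P4' : 0 < Rpower 4 b) by (unfold Rpower; apply exp_pos).
 assert (E1 : 25/16 <= exp (9/16)) by (pose proof (exp_ineq1_le (9/16)); lra).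
 assert (E2 : exp (9/4) = exp (9/16) * exp (9/16) * exp (9/16) * exp (9/16)).
 { rewrite <- !exp_plus. f_equal; field. }
 assert (E3 : 59/10 <= exp (9/4)).
 { rewrite E2. assert (25/16*(25/16) <= exp (9/16) * exp (9/16)) by (apply Rmult_le_compat; lra).
   assert (25/16*(25/16)*(25/16) <= exp (9/16) * exp (9/16) * exp (9/16)) by (apply Rmult_le_compat; lra).
   assert (25/16*(25/16)*(25/16)*(25/16) <= exp (9/16) * exp (9/16) * exp (9/16)* exp (9/16)) by (apply Rmult_le_compat; lra).
   lra. }
 rewrite exp_Ropp.
 assert (0 < / exp (9/4) <= /(59/10)).
 { split. apply Rinv_0_lt_compat, exp_pos. apply Rinv_le_contravar; lra. }
 assert ((3 - b) * Rpower 4 b <= 2 * 16) by (apply Rmult_le_compat; lra).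
 assert ((3 - b) * Rpower 4 b * / exp (9/4) <= 2 * 16 * /(59/10)) by (apply Rmult_le_compat; nra).
 lra. Qed.

Lemma Rpower_ge1 x y : 1 <= x -> 0 <= y -> 1 <= Rpower x y.
Proof. intros. rewrite <- (Rpower_O x) by lra. apply Rle_Rpower; lra. Qed.

Lemma HM b p Mr : 1 < b < 2 -> (1 <= p)%nat -> INR p + 1 <= Mr ->
  (b - 1) * (2 - b) <= - G b p * Rpower Mr b.
Proof. intros Hb Hp HMr. assert (Hp1 : 1 <= INR p) by (replace 1 with (INR 1) by reflexivity; apply le_INR; lia).
 destruct p as [|[|k]]; [lia| |].
 - unfold G; simpl sm. rewrite g0, g1.
   pose proof (Rpower_ge1 Mr b ltac:(lra) ltac:(lra)). nra.
 - pose proof (Hbound b k Hb) as HB.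
   assert (HG : 0 < - G b (S (S k))).
   { rewrite Gclosed by lra. pose proof (gpos b (S (S (S k))) Hb ltac:(lia)).
     pose proof (pos_INR (S (S k))). 
     replace (- (- (INR (S (S k)) + 1) * gcoef b (S (S (S k))) / b)) with ((INR (S (S k)) + 1) * gcoef b (S (S (S k))) / b) by (field; lra).
     apply Rdiv_lt_0_compat; [apply Rmult_lt_0_compat|]; lra. }
   assert (Hk : 1 <= INR (S k)) by (replace 1 with (INR 1) by reflexivity; apply le_INR; lia).
   assert (EM : Rpower Mr b = Mr * Rpower Mr (b - 1)).
   { replace b with (1 + (b - 1)) at 1 by ring. rewrite Rpower_plus, Rpower_1 by lra. auto. }
   rewrite S_INR in HMr.
   assert (R1 : Rpower (INR (S k)) (b - 1) <= Rpower Mr (b - 1)) by (apply Rle_Rpower_l; lra).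
   assert (R0 : 0 < Rpower (INR (S k)) (b - 1)) by (unfold Rpower; apply exp_pos).
   assert ((INR (S k) + 1) * Rpower (INR (S k)) (b - 1) <= Mr * Rpower Mr (b - 1)) by (apply Rmult_le_compat; lra).
   rewrite EM. rewrite Rmult_assoc in HB.
   assert (- G b (S (S k)) * ((INR (S k) + 1) * Rpower (INR (S k)) (b - 1)) <= - G b (S (S k)) * (Mr * Rpower Mr (b - 1))) by (apply Rmult_le_compat_l; lra).
   lra.
Qed.

Lemma key b n : 1 < b < 2 -> (1 <= n)%nat ->
  (b - 1) * (2 - b) * (- 2 * Psi b) <= (2 * sm n (rnat b) - rnat b 0) * Rpower (INR (S n)) b.
Proof. intros Hb Hn. pose proof (Psi_neg b Hb).
 destruct n as [|[|k]]; [lia| |].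
 - change (sm 1 (rnat b)) with (0 + rnat b 0). rewrite Rplus_0_l. replace (2 * rnat b 0 - rnat b 0) with (rnat b 0) by ring.
   rewrite r0_eq. 
   assert (P2 : 2 <= Rpower (INR 2) b).
   { replace 2 with (Rpower (INR 2) 1) at 1 by (rewrite Rpower_1; simpl; lra). apply Rle_Rpower; simpl; lra. }
   assert (0 < - Psi b * (b - 1)) by nra.
   assert (- Psi b * (b - 1) * (b + 2) * 2 <= - Psi b * (b - 1) * (b + 2) * Rpower (INR 2) b) by (apply Rmult_le_compat_l; nra).
   nra.
 - rewrite Pform.
   set (Mr := INR (S (S (S k)))).
   assert (A1 : (b - 1) * (2 - b) <= - G b (S (S k)) * Rpower Mr b) by (apply HM; [auto|lia|]; unfold Mr; rewrite (S_INR (S (S k))); lra).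
   assert (A2 : (b - 1) * (2 - b) <= - G b (S k) * Rpower Mr b) by (apply HM; [auto|lia|]; unfold Mr; rewrite (S_INR (S (S k))), (S_INR (S k)); lra).
   replace (2 * Psi b * (b / 2 * G b (S (S k)) + (2 - b) / 2 * G b (S k)) * Rpower Mr b)
     with ((- 2 * Psi b) * (b / 2 * (- G b (S (S k)) * Rpower Mr b) + (2 - b) / 2 * (- G b (S k) * Rpower Mr b))) by ring.
   replace ((b - 1) * (2 - b) * (- 2 * Psi b)) with ((- 2 * Psi b) * (b / 2 * ((b - 1) * (2 - b)) + (2 - b) / 2 * ((b - 1) * (2 - b)))) by field.
   apply Rmult_le_compat_l; [lra|]. 
   assert (b / 2 * ((b - 1) * (2 - b)) <= b / 2 * (- G b (S (S k)) * Rpower Mr b)) by (apply Rmult_le_compat_l; lra).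
   assert ((2 - b) / 2 * ((b - 1) * (2 - b)) <= (2 - b) / 2 * (- G b (S k) * Rpower Mr b)) by (apply Rmult_le_compat_l; lra).
   lra.
Qed.

Lemma hpow A B b : 0 < A -> 0 < B -> Rpower (A / B) (1 - b) = A / B * Rpower B b / Rpower A b.
Proof. intros HA HB. unfold Rpower.
 rewrite <- (exp_ln (A / B)) at 2 by (apply Rdiv_lt_0_compat; auto).
 unfold Rdiv. rewrite ln_mult, ln_Rinv by (try apply Rinv_0_lt_compat; auto).
 rewrite <- exp_Ropp, <- !exp_plus. f_equal. ring. Qed.

Theorem lemma3p3 (a b beta : R) (M : nat) (v : nat -> R) :
  a < b -> 1 < beta < 2 -> (2 <= M)%nat ->
  v 0%nat = 0 -> v M = 0 ->
  let h := (b - a) / INR M in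
  cstar beta / Rpower (b - a) beta * h * sum_f 1 (M - 1) (fun j => (v j) ^ 2)
  <= Rpower h (1 - beta) *
     sum_f 1 (M - 1)
       (fun j => sum_f_R0 (fun k => rcoef beta (Z.of_nat j - Z.of_nat k) * v k) M * v j)
  /\
  Rpower h (1 - beta) *
     sum_f 1 (M - 1)
       (fun j => sum_f_R0 (fun k => rcoef beta (Z.of_nat j - Z.of_nat k) * v k) M * v j)
  <= 2 * rcoef beta 0 * Rpower h (1 - beta) * sum_f 1 (M - 1) (fun j => (v j) ^ 2).
Proof.
  intros Hab Hb HM Hv0 HvM h.
  destruct M as [|n]; [lia|].
  set (w := fun i => v (S i)).
  set (A := fun j i => rnat beta (Z.abs_nat (Z.of_nat j - Z.of_nat i))).
  assert (EX : sum_f 1 (S n - 1) (fun j => v j ^ 2) = sm n (fun j => w j ^ 2)).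
  { unfold sum_f. rewrite sum_f_R0_sm. replace (S (S n - 1 - 1)) with n by lia.
    apply sm_ext; intros. unfold w. replace (i + 1)%nat with (S i) by lia. reflexivity. }
  assert (EQ : sum_f 1 (S n - 1)
       (fun j => sum_f_R0 (fun k => rcoef beta (Z.of_nat j - Z.of_nat k) * v k) (S n) * v j)
       = sm n (fun j => sm n (fun i => A j i * w i) * w j)).
  { unfold sum_f. rewrite sum_f_R0_sm. replace (S (S n - 1 - 1)) with n by lia.
    apply sm_ext; intros j _. rewrite sum_f_R0_sm. rewrite sm_S, sm_shift. rewrite Hv0, HvM.
    unfold w. replace (j + 1)%nat with (S j) by lia. f_equal.
    rewrite !Rmult_0_r, Rplus_0_l, Rplus_0_r. apply sm_ext; intros i _. unfold A, rcoef. f_equal. f_equal. lia. }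
  rewrite EX, EQ.
  set (X := sm n (fun j => w j ^ 2)).
  set (Q := sm n (fun j => sm n (fun i => A j i * w i) * w j)).
  set (lam := 2 * sm n (rnat beta) - rnat beta 0).
  assert (Hn : (1 <= n)%nat) by lia.
  assert (HX : 0 <= X) by (apply sm_nonneg; intros; nra).
  assert (Asym : forall j i, A j i = A i j) by (intros; unfold A; f_equal; lia).
  assert (Hrow : forall j, (j < n)%nat -> lam <= sm n (fun i => A j i)).
  { intros j Hj. unfold A. rewrite (row n j (rnat beta)) by auto. unfold lam.
    pose proof (P_mono' beta (S j) n Hb ltac:(lia)). pose proof (P_mono' beta (n - j) n Hb ltac:(lia)). lra. }
  pose proof (key beta n Hb Hn) as K. fold lam in K.
  pose proof (cstar_bound beta Hb) as CB.
  assert (Kpos : 0 < (beta - 1) * (2 - beta) * (- 2 * Psi beta)).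
  { pose proof (Psi_neg beta Hb). assert (0 < (beta - 1) * (2 - beta)) by nra. nra. }
  assert (HMb : 0 < Rpower (INR (S n)) beta) by (unfold Rpower; apply exp_pos).
  assert (Hlam : 0 <= lam).
  { destruct (Rle_dec 0 lam); auto. nra. }
  assert (QL : lam * X <= Q).
  { apply Rle_trans with (sm n (fun j => sm n (fun i => A j i) * w j ^ 2)).
    - unfold X. rewrite <- sm_scal. apply sm_le; intros j Hj.
      apply Rmult_le_compat_r; [nra|]. auto.
    - apply quad_lower; auto. intros j i. destruct (Nat.eq_dec j i) as [->|Hji].
      + right. field.
      + assert (A j i <= 0) by (unfold A; apply rnat_nonpos; auto; lia). assert (0 <= - A j i * (w j - w i)^2) by (apply Rmult_le_pos; [lra | apply pow2_ge_0]). nra. }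
  assert (QU : Q <= 2 * rnat beta 0 * X).
  { apply Rle_trans with (sm n (fun j => sm n (fun i => Rabs (A j i)) * w j ^ 2)).
    - apply quad_upper.
      + intros; rewrite Asym; auto.
      + intros j i. destruct (Rle_dec 0 (A j i)).
        * rewrite Rabs_right by lra. assert (0 <= A j i * (w j - w i)^2) by (apply Rmult_le_pos; [lra | apply pow2_ge_0]). nra.
        * rewrite Rabs_left by lra. assert (0 <= - A j i * (w j + w i)^2) by (apply Rmult_le_pos; [lra | apply pow2_ge_0]). nra.
    - unfold X. rewrite <- sm_scal. apply sm_le; intros j Hj.
      apply Rmult_le_compat_r; [nra|].
      unfold A. rewrite (row n j (fun m => Rabs (rnat beta m))) by auto.
      replace (n - j)%nat with (S (n - j - 1)) by lia. rewrite !PA by auto.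
      replace (S (n - j - 1)) with (n - j)%nat by lia.
      rewrite Rabs_right by (apply Rle_ge, r0_nonneg; auto).
      specialize (Hrow j Hj). unfold A in Hrow. rewrite (row n j (rnat beta)) in Hrow by auto. lra. }
  unfold h. rewrite hpow by (try lra; apply lt_0_INR; lia).
  assert (HP0 : Rpower (b - a) beta <> 0) by (unfold Rpower; apply Rgt_not_eq, exp_pos).
  assert (HI0 : INR (S n) <> 0) by (apply not_0_INR; lia).
  set (D := (b - a) / INR (S n) / Rpower (b - a) beta).
  assert (HD : 0 < D).
  { unfold D. apply Rdiv_lt_0_compat; [apply Rdiv_lt_0_compat; [lra| apply lt_0_INR; lia]|].
    unfold Rpower; apply exp_pos. }
  replace ((b - a) / INR (S n) * Rpower (INR (S n)) beta / Rpower (b - a) beta) with (D * Rpower (INR (S n)) beta) by (unfold D; field; auto).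
  replace (cstar beta / Rpower (b - a) beta * ((b - a) / INR (S n)) * X) with (D * (cstar beta * X)) by (unfold D; field; auto).
  change (rcoef beta 0) with (rnat beta 0).
  split.
  - rewrite Rmult_assoc. apply Rmult_le_compat_l; [lra|].
    apply Rle_trans with (Rpower (INR (S n)) beta * (lam * X)).
    + replace (Rpower (INR (S n)) beta * (lam * X)) with ((lam * Rpower (INR (S n)) beta) * X) by ring.
      apply Rmult_le_compat_r; auto. lra.
    + apply Rmult_le_compat_l; lra.
  - replace (2 * rnat beta 0 * (D * Rpower (INR (S n)) beta) * X) with ((D * Rpower (INR (S n)) beta) * (2 * rnat beta 0 * X)) by ring.
    apply Rmult_le_compat_l; [nra|]. auto.
Qed.
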